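(* Let $A$ be a finite set of options and let $\mathcal{L}$ be the set of all Llull matrices on $A$, viewed as a subset of a finite-dimensional real space. For $v\in\mathcal{L}$ let $T(v)\subseteq A$ be the set of path-top choices of $v$. Then $T$ is upper semicontinuous on $\mathcal{L}$: every $v\in\mathcal{L}$ has a neighbourhood $U$ such that $T(w)\subseteq T(v)$ for every $w\in U\cap\mathcal{L}$.
   Context: A Llull matrix on $A$ is a family of real numbers $v_{xy}\in[0,1]$, indexed by ordered pairs $(x,y)$ of distinct elements of $A$, with $v_{xy}+v_{yx}\le1$. Path scores: $v^*_{xy}=\max\min(v_{x_0x_1},\dots,v_{x_{m-1}x_m})$ over all paths $x_0\dots x_m$ ($m\ge1$, $x_0=x$, $x_m=y$, $x_i$ pairwise distinct). Ranking relation: $x\succeq y$ iff there is a path $x_0\dots x_m$ from $x$ to $y$ with $v^*_{x_ix_{i+1}}\ge v^*_{x_{i+1}x_i}$ for all $i<m$. An option $x$ is a path-top choice of $v$ if $x\succeq y$ for all $y\ne x$. *)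

(* Defs.v *)
From HB Require Import structures.
From mathcomp Require Import all_boot all_order all_algebra.
From mathcomp Require Import reals.
Set Implicit Arguments. Unset Strict Implicit. Unset Printing Implicit Defensive.
Import Order.TTheory GRing.Theory Num.Theory.
Local Open Scope ring_scope.

Section Llull.
Variables (R : realType) (A : finType).

(* A matrix is a function on ordered pairs; only the entries v x y with
   x != y are meaningful (diagonal entries are ignored everywhere). *)
Definition llull (v : A -> A -> R) : Prop :=
  forall x y : A, x != y ->
    [/\ 0 <= v x y, v x y <= 1 & v x y + v y x <= 1].

Fixpoint pathmin (v : A -> A -> R) (x : A) (s : seq A) : R :=
  if s is y :: s' then Num.min (v x y) (pathmin v y s') else 1.

Definition simple_path (x y : A) (s : seq A) : bool :=
  [&& s != [::], uniq (x :: s) & last x s == y].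

(* v*_{xy}: maximum over all simple paths from x to y of the minimal edge
   value. Simple paths have at most #|A| - 1 edges, so we enumerate tails
   s of length n < #|A|. *)
Definition vstar (v : A -> A -> R) (x y : A) : R :=
  \big[Num.max/0]_(n < #|A|)
    \big[Num.max/0]_(s : n.-tuple A | simple_path x y s) pathmin v x s.

Definition ranks (v : A -> A -> R) (x y : A) : Prop :=
  exists s : seq A, simple_path x y s /\
    path (fun a b => vstar v b a <= vstar v a b) x s.

Definition path_top (v : A -> A -> R) (x : A) : Prop :=
  forall y : A, y != x -> ranks v x y.

End Llull.

(* Main.v *)
Require Import Defs.
From HB Require Import structures.
From mathcomp Require Import all_boot all_order all_algebra.
From mathcomp Require Import reals.
From mathcomp Require Import lra.
Import Order.TTheory GRing.Theory Num.Theory.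
Local Open Scope ring_scope.

Lemma minle_aux (R : realType) (a b c d e : R) :
  a <= c + e -> b <= d + e -> Num.min a b <= Num.min c d + e.
Proof.
move=> h1 h2; case: (lerP c d) => h.
  by rewrite ge_min h1.
by rewrite ge_min h2 orbT.
Qed.

Lemma bigmax_le_aux (R : realType) (I : finType) (P : pred I) (F G : I -> R) e :
  0 <= e -> (forall i, P i -> F i <= G i + e) ->
  \big[Num.max/0]_(i | P i) F i <= \big[Num.max/0]_(i | P i) G i + e.
Proof.
move=> e0 h.
apply: (big_ind2 (fun a b => a <= b + e)) => //.
  by rewrite add0r.
move=> x1 x2 y1 y2 hx hy; rewrite ge_max; apply/andP; split.
  by apply: (le_trans hx); rewrite lerD2r le_max lexx.
by apply: (le_trans hy); rewrite lerD2r le_max lexx orbT.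
Qed.

Lemma pathmin_le (R : realType) (A : finType) (v w : A -> A -> R) e :
  0 <= e -> (forall x y, x != y -> w x y <= v x y + e) ->
  forall s x, uniq (x :: s) -> pathmin w x s <= pathmin v x s + e.
Proof.
move=> e0 h; elim=> [|y s IH] x /=.
  by move=> _; lra.
rewrite inE negb_or => /andP[/andP[xy _] us].
by apply: minle_aux; [apply: h | apply: IH].
Qed.

Lemma vstar_le (R : realType) (A : finType) (v w : A -> A -> R) e :
  0 <= e -> (forall x y, x != y -> w x y <= v x y + e) ->
  forall a b, vstar w a b <= vstar v a b + e.
Proof.
move=> e0 h a b; rewrite /vstar.
apply: bigmax_le_aux => // n _.
apply: bigmax_le_aux => // s /andP[_ /andP[us _]].
exact: pathmin_le.
Qed.

Lemma exists_eps (R : realType) (I : finType) (P : pred I) (F : I -> R) :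
  (forall i, P i -> 0 < F i) -> exists2 e : R, 0 < e & forall i, P i -> e <= F i.
Proof.
move=> hF.
suff: forall s : seq I, exists2 e : R, 0 < e & forall i, i \in s -> P i -> e <= F i.
  case/(_ (enum I)) => e e0 he; exists e => // i Pi; apply: he => //.
  by rewrite mem_enum.
elim=> [|j s [e e0 he]]; first by exists 1.
case Pj: (P j).
  exists (Num.min e (F j)); first by rewrite lt_min e0 hF.
  move=> i; rewrite inE => /orP[/eqP-> _|iS Pi].
    by rewrite ge_min lexx orbT.
  by rewrite ge_min he.
exists e => // i; rewrite inE => /orP[/eqP->|iS Pi]; first by rewrite Pj.
exact: he.
Qed.

Theorem proposition2p4 (R : realType) (A : finType) (v : A -> A -> R) :
  llull v ->
  exists2 eps : R, 0 < eps &
    forall w : A -> A -> R, llull w ->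
      (forall x y : A, x != y -> `|w x y - v x y| < eps) ->
      forall x : A, path_top w x -> path_top v x.
Proof.
move=> _.
have [g g0 hg] := @exists_eps R (A * A)%type
  (fun p => vstar v p.1 p.2 < vstar v p.2 p.1)
  (fun p => vstar v p.2 p.1 - vstar v p.1 p.2)
  (fun p h => ltac:(rewrite subr_gt0; exact: h)).
exists (g / 3); first lra.
move=> w _ hw x top y yx.
have [s [sp pa]] := top y yx.
exists s; split => //.
apply: sub_path pa => a b /= hab.
rewrite leNgt; apply/negP => lt.
have := hg (a, b) lt => /= hgab.
have e0 : 0 <= g / 3 by lra.
have h1 := @vstar_le R A w v (g / 3) e0 (fun x y xy =>
  ltac:(have := hw x y xy; rewrite ltr_norml => /andP[k1 k2]; lra)) b a.
have h2 := @vstar_le R A v w (g / 3) e0 (fun x y xy =>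
  ltac:(have := hw x y xy; rewrite ltr_norml => /andP[k1 k2]; lra)) a b.
lra.
Qed.
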